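(* Let $n\geqslant2$, $m\geqslant1$, let $\tau$ be a cuspidal $\mathrm{R}$-representation of $\mathrm{GL}_n(k_\mathrm{F})$, and let $g=\mathrm{diag}(\varpi_\mathrm{F}^{\alpha_{n-1}},\dots,\varpi_\mathrm{F}^{\alpha_1},1)$ with integers $0\leqslant\alpha_1\leqslant\dots\leqslant\alpha_{n-1}$ and $\alpha_{n-1}\geqslant m$. Then $$\mathrm{Hom}_{\mathrm{R}[\overline{\mathrm{K}_n\cap g\mathrm{K}_n(m)g^{-1}}]}(1,\tau)=0.$$
   Context: $\mathrm{F}$ non-archimedean local field, ring of integers $\mathfrak{o}_\mathrm{F}$, maximal ideal $\mathfrak{p}_\mathrm{F}=\varpi_\mathrm{F}\mathfrak{o}_\mathrm{F}$, residue field $k_\mathrm{F}$ of characteristic $p$. $\mathrm{R}$ algebraically closed of characteristic $\ell\neq p$. $\mathrm{K}_n=\mathrm{GL}_n(\mathfrak{o}_\mathrm{F})$, $\mathrm{K}_n^1=1+\mathrm{M}_n(\mathfrak{p}_\mathrm{F})$; for a subgroup $H\subseteq\mathrm{K}_n$, $\overline H$ is its image in $\mathrm{K}_n/\mathrm{K}_n^1=\mathrm{GL}_n(k_\mathrm{F})$. For $m\geqslant1$, $\mathrm{K}_n(m)=\{\left(\begin{smallmatrix}a&b\\c&d\end{smallmatrix}\right)\in\mathrm{K}_n: c\in\mathrm{M}_{1\times(n-1)}(\mathfrak{p}_\mathrm{F}^m),\ d\in1+\mathfrak{p}_\mathrm{F}^m\}$ (blocks $(n-1)+1$). Cuspidal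 representation of $\mathrm{GL}_n(k_\mathrm{F})$: irreducible with no nonzero vectors fixed by the unipotent radical of any proper parabolic subgroup. *)

(* Defs.v *)
From HB Require Import structures.
From mathcomp Require Import all_boot all_order all_algebra all_fingroup.
From mathcomp Require Import mxrepresentation.
Set Implicit Arguments. Unset Strict Implicit. Unset Printing Implicit Defensive.
Import Order.TTheory GRing.Theory Num.Theory.
Local Open Scope ring_scope.

Section LocalField.
Variables (F : fieldType) (val : F -> int).

(* normalized discrete valuation (values on nonzero elements; val 0 unused) *)
Definition dval_axioms : Prop :=
  [/\ forall x y : F, x != 0 -> y != 0 -> val (x * y) = val x + val y,
      forall x y : F, x != 0 -> y != 0 -> x + y != 0 ->
        Num.min (val x) (val y) <= val (x + y)
    & exists w : F, w != 0 /\ val w = 1].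

(* x lies in p_F^N, i.e. x = 0 or val x >= N  (N = 0 : ring of integers) *)
Definition in_pow (N : int) (x : F) : bool := (x == 0) || (N <= val x).
Definition intg (x : F) : bool := in_pow 0 x.

Definition val_complete : Prop :=
  forall u : nat -> F,
    (forall N : int, exists M : nat, forall i j : nat,
        (M <= i)%N -> (M <= j)%N -> in_pow N (u i - u j)) ->
    exists l : F, forall N : int, exists M : nat, forall i : nat,
        (M <= i)%N -> in_pow N (u i - l).

(* red : o_F -> k_F is a surjective ring morphism with kernel p_F,
   i.e. k_F = o_F / p_F *)
Definition residue_map (k : finFieldType) (red : F -> k) : Prop :=
  [/\ red 1 = 1,
      {in intg &, forall x y, red (x + y) = red x + red y},
      {in intg &, forall x y, red (x * y) = red x * red y},
      (forall a : k, exists2 x, intg x & red x = a)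
    & {in intg, forall x, (red x == 0) = in_pow 1 x}].

Definition nonarch_local_field (k : finFieldType) (red : F -> k) : Prop :=
  [/\ dval_axioms, val_complete & residue_map red].

Variable n : nat.
Notation N := n.-1.+1.

Definition inK (x : 'M[F]_N) : Prop :=
  (forall i j, intg (x i j)) /\ \det x != 0 /\ val (\det x) = 0.

(* K_n(m): blocks (n-1)+1, last row c in p^m, corner d in 1 + p^m *)
Definition inKm (m : nat) (x : 'M[F]_N) : Prop :=
  [/\ inK x,
      forall j : 'I_N, j != ord_max -> in_pow m%:Z (x ord_max j)
    & in_pow m%:Z (x ord_max ord_max - 1)].

Definition gmat (w : F) (alpha : nat -> nat) : 'M[F]_N :=
  diag_mx (\row_(i < N) w ^+ (if (i < n.-1)%N then alpha (n.-1 - i)%N else 0%N)).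

End LocalField.

(* Hom_{R[H]}(1, rG) = 0 : no nonzero vector fixed by all h with P h *)
Definition no_fixed_vectors (R : fieldType) (gT : finGroupType) (G : {group gT})
  (d : nat) (rG : mx_representation R G d) (P : gT -> Prop) : Prop :=
  forall v : 'rV[R]_d, (forall h, P h -> v *m rG h = v) -> v = 0.

(* unipotent radical of the standard parabolic with block break points S
   (s in S means a block boundary between indices s-1 and s) *)
Definition std_unip (k : fieldType) (N : nat) (S : {set 'I_N}) (A : 'M[k]_N) : Prop :=
  forall i j : 'I_N,
    [/\ i = j -> A i j = 1,
        (j < i)%N -> A i j = 0
      & (i < j)%N -> ~~ [exists s in S, (i < s <= j)%N] -> A i j = 0].

(* cuspidal: irreducible, and no nonzero vector fixed by the unipotent radical
   h U_S h^-1 of any proper parabolic subgroup h P_S h^-1 *)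
Definition cuspidal (k : finFieldType) (n : nat) (R : fieldType) (d : nat)
  (tau : mx_representation R [set: {'GL_n[k]}]%G d) : Prop :=
  mx_irreducible tau /\
  forall (S : {set 'I_n.-1.+1}), S != set0 -> ord0 \notin S ->
  forall h : {'GL_n[k]},
    no_fixed_vectors tau (fun u => std_unip S (GLval (h^-1 * u * h)%g)).

(* Main.v *)
Require Import Defs.
From HB Require Import structures.
From mathcomp Require Import all_boot all_order all_algebra all_fingroup.
From mathcomp Require Import mxrepresentation.
Import Order.TTheory GRing.Theory Num.Theory.
Local Open Scope ring_scope.

Section Val.
Variables (F : fieldType) (val : F -> int).
Hypothesis vmul : forall x y : F, x != 0 -> y != 0 -> val (x * y) = val x + val y.
Variable w : F.
Hypotheses (wnz : w != 0) (w1 : val w = 1).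

Lemma val1 : val 1 = 0.
Proof.
have := @vmul 1 1 (oner_neq0 F) (oner_neq0 F); rewrite mulr1 => h.
by apply: (@addrI _ (val 1)); rewrite addr0 -h.
Qed.

Lemma valX k : val (w ^+ k) = k%:Z.
Proof.
elim: k => [|k IH]; first by rewrite expr0 val1.
rewrite exprS (@vmul w) ?expf_neq0 // IH w1 -addn1 PoszD addrC //.
Qed.

Lemma inpow_mulX (N : int) k c : intg val c -> N <= k%:Z -> in_pow val N (w ^+ k * c).
Proof.
rewrite /intg /in_pow; case: eqP => [->|/eqP cnz] /= H Hk.
  by rewrite mulr0 eqxx.
rewrite mulf_eq0 expf_eq0 (negbTE wnz) (negbTE cnz) andbF /=.
by rewrite (@vmul (w ^+ k)) ?expf_neq0 // valX; apply: (le_trans Hk); rewrite lerDl.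
Qed.
End Val.

Theorem proposition4p7 (F : fieldType) (val : F -> int) (k : finFieldType)
  (red : F -> k) (R : closedFieldType) (n m : nat) (w : F) (alpha : nat -> nat)
  (d : nat) (tau : mx_representation R [set: {'GL_n[k]}]%G d) :
  nonarch_local_field val red ->
  (forall p : nat, p \in [pchar k] -> p \notin [pchar R]) ->
  (2 <= n)%N -> (1 <= m)%N ->
  w != 0 -> val w = 1 ->
  (forall i j : nat, (1 <= i)%N -> (i <= j)%N -> (j <= n.-1)%N ->
     (alpha i <= alpha j)%N) ->
  (m <= alpha n.-1)%N ->
  cuspidal tau ->
  no_fixed_vectors tau
    (fun h : {'GL_n[k]} =>
       exists x : 'M[F]_n.-1.+1,
         [/\ inK val x,
             inKm val m (invmx (gmat n w alpha) *m x *m gmat n w alpha)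
           & map_mx red x = GLval h]).
Proof.
move=> [[vmul _ _] _ [red1 redD redM redS redK]] _ n2 m1 wnz w1 amono am [_ cusp].
move=> v Hv.
set N := n.-1.+1.
have n1 : (0 < n.-1)%N by rewrite -ltnS prednK // ltnW.
pose s : {perm 'I_N} := perm (@rev_ord_inj N).
pose h0 : {'GL_n[k]} := FinRing.Unit (unitmx_perm k s).
apply: (cusp [set ord_max] _ _ h0 v).
- by apply/set0Pn; exists ord_max; rewrite in_set1.
- by rewrite in_set1 -val_eqE /= eq_sym -lt0n.
move=> u Hu; apply: Hv.
pose A := GLval (h0^-1 * u * h0)%g.
have sE i : s i = rev_ord i by rewrite permE.
have Ue' : forall i j, GLval u i j = A (rev_ord i) (rev_ord j).
  have -> : GLval u = perm_mx s *m A *m invmx (perm_mx s).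
    rewrite /A !GL_MxE GL_VxE /=.
    by rewrite !mulmxA mulmxV ?unitmx_perm // mul1mx mulmxK ?unitmx_perm.
  have -> : invmx (perm_mx s) = perm_mx s^-1 :> 'M[k]_N.
    rewrite -[RHS]mul1mx -(mulVmx (unitmx_perm _ s)) -mulmxA -perm_mxM.
    by rewrite mulgV perm_mx1 mulmx1.
  by move=> i j; rewrite -row_permE -col_permE !mxE !sE.
have Ue : forall i j, GLval u i j =
   (if i == j then 1 else if j == ord0 then GLval u i ord0 else 0).
  move=> i j; case: eqP => [->|/eqP ij].
    by rewrite Ue'; case: (Hu (rev_ord j) (rev_ord j)) => ->.
  case: eqP => [->//|/eqP j0].
  rewrite Ue'; case: (Hu (rev_ord i) (rev_ord j)) => _ H2 H3.
  have rj : (rev_ord j < n.-1)%N.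
    by rewrite /= subSS; move: j0; rewrite -val_eqE /= -lt0n => j0; rewrite ltn_subrL j0.
  case: (ltngtP (rev_ord i) (rev_ord j)) => [lt|gt|eq].
  - apply: H3 => //; apply/negP => /existsP [x /andP [/set1P -> /andP [_ /=]]].
    by rewrite leqNgt rj.
  - by apply: H2.
  - by move: ij; rewrite -(inj_eq rev_ord_inj) => /eqP []; apply: val_inj.
have lift_ex : forall a : k, exists x : F, intg val x && (red x == a).
  by move=> a; case: (redS a) => x ix rx; exists x; rewrite ix rx eqxx.
pose lift a := xchoose (lift_ex a).
have liftP a : intg val (lift a) && (red (lift a) == a) := xchooseP (lift_ex a).
have intg_lift a : intg val (lift a) by case/andP: (liftP a).
have red_lift a : red (lift a) = a by case/andP: (liftP a) => _ /eqP.
have red0 : red 0 = 0.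
  have i0 : intg val 0 by rewrite /intg /in_pow eqxx.
  have := redD 0 0 i0 i0; rewrite addr0 => h; apply: (@addrI _ (red 0)); by rewrite addr0 -h.

have intg0 : intg val (0 : F) by rewrite /intg /in_pow eqxx.
have intg1 : intg val (1 : F) by rewrite /intg /in_pow (@val1 F val vmul) lexx orbT.
pose c i := lift (GLval u i ord0).
pose x : 'M[F]_N := \matrix_(i, j) (if i == j then 1 else if j == ord0 then c i else 0).
pose e (i : 'I_N) := (if (i < n.-1)%N then alpha (n.-1 - i) else 0)%N.
have e0 : e ord0 = alpha n.-1 by rewrite /e /= n1 subn0.
have eS i : (e i <= e ord0)%N.
  rewrite e0 /e; case: ifP => // lt; apply: amono => //.
    by rewrite subn_gt0.
  exact: leq_subr.
pose Y : 'M[F]_N := \matrix_(i, j) (if i == j then 1 else if j == ord0 then w ^+ (e ord0 - e i) * c i else 0).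
have trigx : is_trig_mx x.
  apply/is_trig_mxP => i j lt; rewrite mxE.
  case: eqP => [ij|_]; first by move: lt; rewrite ij ltnn.
  by case: eqP => // j0; move: lt; rewrite j0 ltn0.
have trigY : is_trig_mx Y.
  apply/is_trig_mxP => i j lt; rewrite mxE.
  case: eqP => [ij|_]; first by move: lt; rewrite ij ltnn.
  by case: eqP => // j0; move: lt; rewrite j0 ltn0.
have detx : \det x = 1.
  by rewrite det_trig // big1 // => i _; rewrite mxE eqxx.
have detY : \det Y = 1.
  by rewrite det_trig // big1 // => i _; rewrite mxE eqxx.
have gunit : gmat n w alpha \in unitmx.
  rewrite unitmxE /gmat det_trig ?diag_mx_is_trig // unitfE.
  by apply/prodf_neq0 => l _; rewrite mxE eqxx mxE mulr1n expf_neq0.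
have yE : invmx (gmat n w alpha) *m x *m gmat n w alpha = Y.
  rewrite -mulmxA.
  have -> : x *m gmat n w alpha = gmat n w alpha *m Y.
    apply/matrixP => a b; rewrite /gmat mul_mx_diag mul_diag_mx !mxE.
    case: eqP => [<-|/eqP ij]; first by rewrite mulr1 mul1r.
    case: eqP => [j0|_]; last by rewrite mul0r mulr0.
    rewrite mulrA -exprD -/(e a) -/(e b) j0 subnKC ?eS // mulrC.
    by rewrite -/(e ord0).
  by rewrite mulKmx.
exists x; split.
- split; last by rewrite detx (@val1 F val vmul) oner_neq0.
  move=> a b; rewrite mxE; case: eqP => _; first by []. case: eqP => _. exact: intg_lift. by [].
- rewrite yE; split.
  + split; last by rewrite detY (@val1 F val vmul) oner_neq0.
    move=> i j; rewrite mxE; case: eqP => // _; case: eqP => // _.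
    rewrite /intg; apply: (@inpow_mulX F val vmul w wnz w1); first exact: intg_lift.
    by [].
  + move=> j jm; rewrite /Y mxE eq_sym (negbTE jm); case: eqP => // _.
    apply: (@inpow_mulX F val vmul w wnz w1); first exact: intg_lift.
    have -> : e ord_max = 0%N by rewrite /e /= ltnn.
    by rewrite subn0 e0 lez_nat.
    by rewrite /in_pow eqxx.
  + by rewrite /Y mxE eqxx subrr /in_pow eqxx.
- apply/matrixP => i j; rewrite !mxE Ue.
  case: eqP => _; first exact: red1.
  case: eqP => _; [exact: red_lift | exact: red0].
Qed.
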